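(* Let $n,k,l$ be nonnegative integers with $k+l\le n$, let $\alpha,\beta>-1$, set $\sigma=\alpha+\beta+1$, and for $h=k,\ldots,n-l$ and $i=k+l,\ldots,n$ define \[ z_{hi}=\binom{n}{h}\frac{(2i+\sigma)(k+l-n)_{i-k-l}(\alpha+2l+1)_{n-l-h}(\beta+2k+1)_{h-k}}{(\alpha+2l+1)_{i-k-l}\,(i+k+l+\sigma)_{n+1-k-l}},\qquad w_{hi}=Q_{i-k-l}(h-k;\,\beta+2k,\,\alpha+2l,\,n-k-l). \] Then for each fixed $h$ (and whenever the indices involved lie in the range $k+l\le i\le n$): \[ z_{h,k+l}=\binom{n}{h}\frac{(\alpha+2l+1)_{n-l-h}(\beta+2k+1)_{h-k}}{(2k+2l+\sigma+1)_{n-k-l}}, \] \[ z_{hi}=\frac{(2i+\sigma)(i+k+l+\alpha+\beta)(i-n-1)}{(\alpha+l+i-k)(i+n+\sigma)(2i+\alpha+\beta-1)}\,z_{h,i-1}\qquad(i=k+l+1,\ldots,n); \] and \[ w_{h,k+l}=1,\qquad w_{h,k+l+1}=1+\frac{(h-k)(2k+2l+\sigma+1)}{(k+l-n)(\beta+2k+1)}, \] \[ w_{hi}=P_h(i)\,w_{h,i-1}+S(i)\,w_{h,i-2}\qquad(i=k+l+2,\ldots,n), \] where \[ S(i)=\frac{(i-k-l-1)(i+\beta+\alpha+n)(i+l+\alpha-k-1)(2i+\beta+\alpha)}{(2i+\beta+\alpha-2)(i+k+l+\beta+\alpha)(i+k+\beta-l)(i-n-1)}, \] \[ P_h(i)=1-S(i)-\frac{(k-h)(2i+\alpha+\beta-1)_2}{(i+k+l+\alpha+\beta)(i+k+\beta-l)(i-n-1)}.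 \]
   Context: Pochhammer symbol: $(a)_0=1$, $(a)_j=a(a+1)\cdots(a+j-1)$. Hahn polynomials: for a nonnegative integer $N$, $a,b>-1$ and $m=0,1,\ldots,N$, $Q_m(x;a,b,N)=\sum_{j=0}^m\frac{(-m)_j(m+a+b+1)_j(-x)_j}{j!\,(a+1)_j\,(-N)_j}$. (The products $d_{hi}=z_{hi}w_{hi}$ are the coefficients of the Bernstein polynomial $B^n_h(x)=\binom nh x^h(1-x)^{n-h}$ in the basis of modified Jacobi polynomials $J_{i,k,l}^{(\alpha,\beta)}(x)=(1-x)^lx^kR^{(\alpha+2l,\beta+2k)}_{i-k-l}(x)$, $i=k+l,\ldots,n$, with $R^{(a,b)}_m$ the shifted Jacobi polynomials.) *)

(* Defs.v *)
From HB Require Import structures.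
From mathcomp Require Import all_boot all_order all_algebra.
Set Implicit Arguments. Unset Strict Implicit. Unset Printing Implicit Defensive.
Import Order.TTheory GRing.Theory Num.Theory.
Local Open Scope ring_scope.

Definition poch (R : ringType) (a : R) (j : nat) : R :=
  \prod_(i < j) (a + i%:R).

Definition hahnQ (R : fieldType) (m : nat) (x a b : R) (N : nat) : R :=
  \sum_(j < m.+1)
    (poch (- m%:R) j * poch (m%:R + a + b + 1) j * poch (- x) j)
    / (j`!%:R * poch (a + 1) j * poch (- N%:R) j).

Definition sigma (R : ringType) (al be : R) : R := al + be + 1.

Definition zc (R : fieldType) (n k l : nat) (al be : R) (h i : nat) : R :=
  'C(n, h)%:R *
  ((2 * i%:R + sigma al be) * poch ((k + l)%:R - n%:R) (i - k - l)
     * poch (al + (2 * l)%:R + 1) (n - l - h) * poch (be + (2 * k)%:R + 1) (h - k))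
  / (poch (al + (2 * l)%:R + 1) (i - k - l)
     * poch (i%:R + (k + l)%:R + sigma al be) (n.+1 - k - l)).

Definition wc (R : fieldType) (n k l : nat) (al be : R) (h i : nat) : R :=
  hahnQ (i - k - l) (h%:R - k%:R) (be + (2 * k)%:R) (al + (2 * l)%:R) (n - k - l).

Definition Sc (R : fieldType) (n k l : nat) (al be : R) (i : nat) : R :=
  ((i%:R - k%:R - l%:R - 1) * (i%:R + be + al + n%:R)
     * (i%:R + l%:R + al - k%:R - 1) * (2 * i%:R + be + al))
  / ((2 * i%:R + be + al - 2) * (i%:R + k%:R + l%:R + be + al)
     * (i%:R + k%:R + be - l%:R) * (i%:R - n%:R - 1)).

Definition Pc (R : fieldType) (n k l : nat) (al be : R) (h i : nat) : R :=
  1 - Sc n k l al be i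
  - ((k%:R - h%:R) * poch (2 * i%:R + al + be - 1) 2)
    / ((i%:R + k%:R + l%:R + al + be) * (i%:R + k%:R + be - l%:R) * (i%:R - n%:R - 1)).

(* Main.v *)
Require Import Defs.
From HB Require Import structures.
From mathcomp Require Import all_boot all_order all_algebra.
From mathcomp Require Import ring lra zify.
Import Order.TTheory GRing.Theory Num.Theory.
Local Open Scope ring_scope.
Lemma poch0 (R : ringType) (a : R) : poch a 0 = 1.
Proof. by rewrite /poch big_ord0. Qed.

Lemma pochS (R : ringType) (a : R) j : poch a j.+1 = poch a j * (a + j%:R).
Proof. by rewrite /poch big_ord_recr. Qed.

Lemma pochSl (R : ringType) (a c : R) j : c = a + 1 -> poch a j.+1 = a * poch c j.
Proof.
move=> ->; rewrite /poch big_ord_recl /= addr0; congr (_ * _).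
by apply: eq_bigr => i _; rewrite /bump /= -natr1 addrA addrAC.
Qed.

Lemma poch_gt0 (R : realFieldType) (a : R) j : 0 < a -> 0 < poch a j.
Proof.
move=> a0; rewrite /poch; apply: prodr_gt0 => i _.
by apply: (lt_le_trans a0); rewrite lerDl ler0n.
Qed.

Lemma poch_neq0 (R : realFieldType) (a : R) j :
  (forall i, (i < j)%N -> a + i%:R != 0) -> poch a j != 0.
Proof.
elim: j => [|j IH] H; first by rewrite poch0 oner_neq0.
rewrite pochS mulf_neq0 //; [by apply: IH => i Hi; apply: H; lia | exact: H].
Qed.

Lemma poch_natN0 (R : ringType) (k j : nat) : (k < j)%N -> poch (- (k%:R : R)) j = 0.
Proof.
elim: j => [|j IH] //= Hk; rewrite pochS.
case: (ltngtP k j) => H; first by rewrite IH // mul0r.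
- lia.
- by rewrite H addNr mulr0.
Qed.
Section S2.
Set Implicit Arguments. Unset Strict Implicit. Unset Printing Implicit Defensive.
Lemma pochL2 (R : ringType) (x y : R) j : y = x + 2 -> poch x j.+2 = x * (x + 1) * poch y j.
Proof.
move=> Hy; rewrite (@pochSl _ x (x + 1)) // (@pochSl _ (x + 1) y) //; last by rewrite Hy -addrA.
by rewrite mulrA.
Qed.

Definition T (R : fieldType) (a b : R) (N : nat) (m : R) (j : nat) : R :=
  poch (- m) j * poch (m + a + b + 1) j / (j`!%:R * poch (a + 1) j * poch (- N%:R) j).

Definition Ap (R : fieldType) (a b : R) (N : nat) (m : R) :=
  (m+a+b) * (m+a) * (N%:R-m+1) * (2 * m+a+b-2).
Definition Cp (R : fieldType) (a b : R) (N : nat) (m : R) :=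
  (m-1) * (m+a+b+N%:R) * (m+b-1) * (2 * m+a+b).
Definition Dp (R : fieldType) (a b : R) (m : R) :=
  (2 * m+a+b-2) * (2 * m+a+b-1) * (2 * m+a+b).
Definition W (R : fieldType) (a b : R) (N : nat) (m : R) (j : nat) :=
  Ap a b N m * T a b N m j - (Ap a b N m + Cp a b N m - Dp a b m * j%:R) * T a b N (m-1) j
  + Cp a b N m * T a b N (m-2) j.

Lemma W0 (R : fieldType) (a b : R) N m : W a b N m 0 = 0.
Proof. rewrite /W /T !poch0 fact0 /=. by field; rewrite oner_neq0. Qed.

Lemma WS (R : realFieldType) (a b : R) N m j : 0 < a + 1 -> (j.+1 <= N)%N ->
  W a b N m j.+1 = Dp a b m * T a b N (m-1) j.
Proof.
move=> Ha HjN.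
have Hf : forall i, (i%:R : R) + 1 != 0.
  by move=> i; rewrite natr1 pnatr_eq0.
have Ha' : forall i : nat, a + 1 + i%:R != 0.
  move=> i; apply/eqP => H; have : (0 : R) <= i%:R by rewrite ler0n.
  lra.
case: j HjN => [|j] HjN.
  rewrite /W /T !pochS !poch0 /= !mul1r.
  rewrite /Ap /Cp /Dp /=. field. rewrite pnatr_eq0 -lt0n HjN /=.
  apply/eqP => H; lra.
have E1 : poch (- m) j.+2 = - m * (- m + 1) * poch (- m + 2) j by apply: pochL2.
have E2 : poch (m + a + b + 1) j.+2 = poch (m + a + b + 1) j * (m + a + b + 1 + j%:R) * (m + a + b + 1 + j.+1%:R)
  by rewrite !pochS ?mulrA.
have E3 : poch (- (m - 1)) j.+2 = - (m - 1) * (poch (- m + 2) j * (- m + 2 + j%:R)).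
  by rewrite (@pochSl _ _ (- m + 2)) ?pochS //; ring.
have E4 : poch (m - 1 + a + b + 1) j.+2 = (m - 1 + a + b + 1) * (poch (m + a + b + 1) j * (m + a + b + 1 + j%:R)).
  by rewrite (@pochSl _ _ (m + a + b + 1)) ?pochS //; ring.
have E5 : poch (- (m - 2)) j.+2 = poch (- m + 2) j * (- m + 2 + j%:R) * (- m + 2 + j.+1%:R).
  by rewrite !pochS ?mulrA; have -> : - (m - 2) = - m + 2 by ring.
have E6 : poch (m - 2 + a + b + 1) j.+2 = (m - 2 + a + b + 1) * (m - 2 + a + b + 1 + 1) * poch (m + a + b + 1) j.
  by apply: pochL2; ring.
have E7 : poch (- (m - 1)) j.+1 = - (m - 1) * poch (- m + 2) j.
  by apply: pochSl; ring.
have E8 : poch (m - 1 + a + b + 1) j.+1 = (m - 1 + a + b + 1) * poch (m + a + b + 1) j.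
  by apply: pochSl; ring.
rewrite /W /T E1 E2 E3 E4 E5 E6 E7 E8.
rewrite !factS !natrM !pochS.
have HN : forall i, (i < N)%N -> - (N%:R : R) + i%:R != 0.
  move=> i Hi; apply/eqP => H.
  have : (i%:R : R) < N%:R by rewrite ltr_nat.
  lra.
have HfN := HN j ltac:(lia).
have HfN1 := HN j.+1 ltac:(lia).
have He2 : poch (- (N%:R : R)) j != 0 by apply: poch_neq0 => i Hi; apply: HN; lia.
have He1 : poch (a + 1) j != 0 by apply/lt0r_neq0/poch_gt0.
have Hfj : (j`!%:R : R) != 0 by rewrite pnatr_eq0 -lt0n fact_gt0.
have Ha1 := Ha' j. have Ha2 := Ha' j.+1.
have H2 : (2 + j%:R : R) != 0.
  apply/eqP => H; have : (0 : R) <= j%:R by rewrite ler0n.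
  lra.
rewrite /Ap /Cp /Dp. field.
by rewrite nat1r HfN He2 Ha1 He1 Hfj HfN1 Ha2 H2 pnatr_eq0.
Qed.
Lemma hahnT (R : fieldType) K (x a b : R) N :
  hahnQ K x a b N = \sum_(j < K.+1) T a b N K%:R j * poch (- x) j.
Proof. by apply: eq_bigr => j _; rewrite /T mulrAC. Qed.

Lemma T_zero (R : fieldType) (a b : R) N K j : (K < j)%N -> T a b N K%:R j = 0.
Proof. by move=> H; rewrite /T poch_natN0 // !mul0r. Qed.

Lemma extT (R : fieldType) (a b x : R) N K d :
  \sum_(j < K.+1) T a b N K%:R j * poch (- x) j =
  \sum_(j < (K + d).+1) T a b N K%:R j * poch (- x) j.
Proof.
elim: d => [|d IH]; first by rewrite addn0.
have Hz : (K < (K + d).+1)%N by lia.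
by rewrite addnS [in RHS]big_ord_recr /= (T_zero _ _ _ Hz) mul0r addr0.
Qed.

Definition V (R : fieldType) (a b x : R) N m j :=
  Dp a b m * T a b N (m - 1) j * poch (- x) j.+1.

Lemma telesc (R : realFieldType) (a b x : R) N m J : 0 < a + 1 -> (J <= N)%N ->
  \sum_(j < J.+1) (W a b N m j * poch (- x) j - V a b x N m j) = - V a b x N m J.
Proof.
move=> Ha; elim: J => [|J IH] HJ.
  by rewrite big_ord_recr big_ord0 /= W0 mul0r add0r sub0r.
rewrite big_ord_recr /= (IH (ltnW HJ)).
rewrite WS //.
rewrite /V pochS; ring.
Qed.

Lemma core (R : realFieldType) (a b x : R) (N M : nat) : 0 < a + 1 -> (M.+2 <= N)%N ->
  Ap a b N (M.+2)%:R * hahnQ M.+2 x a b N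
  - (Ap a b N (M.+2)%:R + Cp a b N (M.+2)%:R - x * Dp a b (M.+2)%:R) * hahnQ M.+1 x a b N
  + Cp a b N (M.+2)%:R * hahnQ M x a b N = 0.
Proof.
move=> Ha HMN.
rewrite !hahnT (extT _ _ _ _ M.+1 1) (extT _ _ _ _ M 2) !addn1 addn2.
set m := (M.+2)%:R.
have -> : (M.+1)%:R = m - 1 by rewrite /m -natr1; ring.
have -> : (M%:R : R) = m - 2 by rewrite /m -natr1 -natr1; ring.
rewrite !mulr_sumr -sumrB -big_split /=.
rewrite (eq_bigr (fun j : 'I_M.+3 => W a b N m j * poch (- x) j - V a b x N m j)); last first.
  by move=> j _; rewrite /W /V pochS; ring.
rewrite telesc //.
rewrite /V /T.
have -> : m - 1 = (M.+1)%:R by rewrite /m -natr1; ring.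
by rewrite poch_natN0 // !mul0r mulr0 mul0r oppr0.
Qed.
End S2.
Lemma part1 (R : realFieldType) (n k l : nat) (al be : R) :
  (k + l <= n)%N -> -1 < al -> -1 < be ->
  (2 * (k + l))%:R + sigma al be != 0 ->
  forall h : nat, (k <= h <= n - l)%N ->
  zc n k l al be h (k + l) =
        'C(n, h)%:R * (poch (al + (2 * l)%:R + 1) (n - l - h)
                       * poch (be + (2 * k)%:R + 1) (h - k))
        / poch ((2 * k)%:R + (2 * l)%:R + sigma al be + 1) (n - k - l).
Proof.
move=> Hkl Hal Hbe Hs h /andP[Hkh Hhn].
rewrite /zc.
have -> : (k + l - k - l = 0)%N by lia.
have -> : (n.+1 - k - l = (n - k - l).+1)%N by lia.
rewrite !poch0 (@pochSl _ _ ((2 * k)%:R + (2 * l)%:R + sigma al be + 1)); last first.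
  rewrite !natrM !natrD; ring.
have Hp : poch ((2 * k)%:R + (2 * l)%:R + sigma al be + 1) (n - k - l) != 0.
  apply/lt0r_neq0/poch_gt0; rewrite /sigma !natrM.
  have : (0 : R) <= k%:R by rewrite ler0n.
  have : (0 : R) <= l%:R by rewrite ler0n.
  lra.
move: Hs Hp; rewrite !natrM !natrD => Hs Hp.
field.
have -> : (k%:R + l%:R + (k%:R + l%:R) + sigma al be : R) = 2 * (k%:R + l%:R) + sigma al be by ring.
by rewrite Hp Hs.
Qed.

Lemma pochshift (R : fieldType) (c : R) r : c != 0 ->
  poch (c + 1) r = poch c r * (c + r%:R) / c.
Proof.
move=> Hc; have E1 := @pochSl _ c (c + 1) r erefl.
have E2 := @pochS _ c r.
rewrite E2 in E1; rewrite E1; field; exact: Hc.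
Qed.

Lemma part2 (R : realFieldType) (n k l : nat) (al be : R) :
  (k + l <= n)%N -> -1 < al -> -1 < be ->
  (2 * (k + l))%:R + sigma al be != 0 ->
  forall h : nat, (k <= h <= n - l)%N ->
      (forall i : nat, (k + l + 1 <= i <= n)%N ->
        zc n k l al be h i =
          ((2 * i%:R + sigma al be) * (i%:R + k%:R + l%:R + al + be) * (i%:R - n%:R - 1))
          / ((al + l%:R + i%:R - k%:R) * (i%:R + n%:R + sigma al be)
             * (2 * i%:R + al + be - 1))
          * zc n k l al be h i.-1).
Proof.
move=> Hkl Hal Hbe Hs h /andP[Hkh Hhn] i /andP[Hi1 Hi2].
have [M HM] : exists M, i = (k + l + M).+1 by exists (i - (k + l + 1))%N; lia.
subst i; rewrite /zc /=.
have -> : ((k + l + M).+1 - k - l = M.+1)%N by lia.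
have -> : ((k + l + M) - k - l = M)%N by lia.
rewrite !pochS.
have Ei : (((k + l + M).+1)%:R : R) = k%:R + l%:R + M%:R + 1 by rewrite -natr1 !natrD.
have Ei' : (((k + l + M))%:R : R) = k%:R + l%:R + M%:R by rewrite !natrD.
have h1 : (l <= n.+1 - k)%N by lia.
have h2 : (k <= n.+1)%N by lia.
have Er : (((n.+1 - k - l)%N)%:R : R) = n%:R + 1 - k%:R - l%:R.
  by rewrite (natrB _ h1) (natrB _ h2) -natr1.
move: Hs; rewrite !natrM !natrD => Hs.
rewrite Ei.
have HK : (0 : R) <= k%:R by rewrite ler0n.
have HL : (0 : R) <= l%:R by rewrite ler0n.
have HMr : (0 : R) <= M%:R by rewrite ler0n.
have HN : (k + l + M + 1 <= n)%N by lia.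
have HNr : (k%:R + l%:R + M%:R + 1 : R) <= n%:R.
  by rewrite -Ei' natr1 ler_nat; lia.
set c := k%:R + l%:R + M%:R + (k%:R + l%:R) + sigma al be.
have Hc : c != 0.
  rewrite /c; case: M {Ei Ei' HMr HNr HN Hi1 Hi2 c} => [|M].
    have -> : (k%:R + l%:R + 0%:R + (k%:R + l%:R) + sigma al be : R) = 2 * (k%:R + l%:R) + sigma al be.
      by rewrite mulr0n; ring.
    exact: Hs.
  apply/lt0r_neq0; have : (1 : R) <= M.+1%:R by rewrite ler1n.
  rewrite /sigma; lra.
have -> : k%:R + l%:R + M%:R + 1 + (k%:R + l%:R) + sigma al be = c + 1 by rewrite /c; ring.
rewrite (@pochshift _ c _ Hc) Er.
have Hp0 : poch c (n.+1 - k - l) != 0.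
  apply: poch_neq0 => j Hj; case: j Hj => [|j] Hj; first by rewrite addr0.
  apply/lt0r_neq0; have : (1 : R) <= j.+1%:R by rewrite ler1n.
  rewrite /c /sigma; lra.
have Hq : poch (al + 2 * l%:R + 1) M != 0.
  apply/lt0r_neq0/poch_gt0; lra.
move: Hc Hp0; rewrite /c /sigma => Hc Hp0.
rewrite /sigma.
have Hd : 2 * (k%:R + l%:R + M%:R + 1) + al + be - 1 != 0.
  clear c; case: M {Ei Ei' HMr HNr HN Hi1 Hi2 Hc Hp0 Hq} => [|M].
    move: Hs; rewrite /sigma mulr0n.
    by have -> : (2 * (k%:R + l%:R + 0 + 1) + al + be - 1 : R) = 2 * (k%:R + l%:R) + (al + be + 1) by ring.
  apply/lt0r_neq0; have : (1 : R) <= M.+1%:R by rewrite ler1n.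
  lra.
field.
rewrite Hp0 Hq Hc Hd /= andbT; apply/andP; split; apply/lt0r_neq0; lra.
Qed.

Lemma part3 (R : realFieldType) (n k l : nat) (al be : R) h :
  wc n k l al be h (k + l) = 1.
Proof.
rewrite /wc; have -> : (k + l - k - l = 0)%N by lia.
by rewrite /hahnQ big_ord1 !poch0 /= fact0 !mulr1 divr1.
Qed.

Lemma part4 (R : realFieldType) (n k l : nat) (al be : R) :
  (k + l <= n)%N -> -1 < al -> -1 < be ->
  forall h : nat, (k <= h <= n - l)%N ->
      ((k + l + 1 <= n)%N ->
        wc n k l al be h (k + l).+1 =
          1 + ((h%:R - k%:R) * ((2 * k)%:R + (2 * l)%:R + sigma al be + 1))
              / (((k + l)%:R - n%:R) * (be + (2 * k)%:R + 1))).
Proof.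
move=> Hkl Hal Hbe h _ H1.
rewrite /wc; have -> : ((k + l).+1 - k - l = 1)%N by lia.
rewrite /hahnQ !big_ord_recr big_ord0 /= !pochS !poch0.
have h1 : (k + l <= n)%N by lia.
have -> : ((n - k - l)%N%:R : R) = n%:R - k%:R - l%:R.
  by rewrite -subnDA natrB // natrD; ring.
rewrite !natrM !natrD /sigma.
have HK : (0 : R) <= k%:R by rewrite ler0n.
have HL : (0 : R) <= l%:R by rewrite ler0n.
have HNr : (k%:R + l%:R + 1 : R) <= n%:R.
  by rewrite -natrD natr1 ler_nat; lia.
field.
by apply/and3P; split; apply/eqP => H; lra.
Qed.

Lemma part5 (R : realFieldType) (n k l : nat) (al be : R) :
  (k + l <= n)%N -> -1 < al -> -1 < be ->
  forall h : nat, (k <= h <= n - l)%N ->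
    (forall i : nat, (k + l + 2 <= i <= n)%N ->
        wc n k l al be h i =
          Pc n k l al be h i * wc n k l al be h i.-1
          + Sc n k l al be i * wc n k l al be h (i - 2)).
Proof.
move=> Hkl Hal Hbe h _ i /andP[Hi1 Hi2].
have [M HM] : exists M, i = (k + l + M).+2 by exists (i - (k + l + 2))%N; lia.
subst i; rewrite /wc /=.
have -> : ((k + l + M).+2 - k - l = M.+2)%N by lia.
have -> : ((k + l + M).+1 - k - l = M.+1)%N by lia.
have -> : ((k + l + M).+2 - 2 - k - l = M)%N by lia.
set a := be + (2 * k)%:R.
set b := al + (2 * l)%:R.
set x := h%:R - k%:R.
set N := (n - k - l)%N.
have Ha : 0 < a + 1.
  rewrite /a; have : (0 : R) <= (2 * k)%:R by rewrite ler0n.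
  lra.
have HMN : (M.+2 <= N)%N by rewrite /N; lia.
have Hcore := @core _ a b x N M Ha HMN.
set Q2 := hahnQ M.+2 x a b N in Hcore *.
set Q1 := hahnQ M.+1 x a b N in Hcore *.
set Q0 := hahnQ M x a b N in Hcore *.
set A := Ap a b N M.+2%:R in Hcore.
set C := Cp a b N M.+2%:R in Hcore.
set D := Dp a b M.+2%:R in Hcore.
have Ei : ((k + l + M).+2%:R : R) = k%:R + l%:R + M%:R + 2.
  by rewrite -!natr1 !natrD; ring.
have Em : (M.+2%:R : R) = M%:R + 2 by rewrite -!natr1; ring.
have EN : (N%:R : R) = n%:R - k%:R - l%:R.
  by rewrite /N -subnDA natrB ?natrD //; ring.
have HK : (0 : R) <= k%:R by rewrite ler0n.
have HL : (0 : R) <= l%:R by rewrite ler0n.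
have HMr : (0 : R) <= M%:R by rewrite ler0n.
have HNr : (k%:R + l%:R + M%:R + 2 : R) <= n%:R.
  by rewrite -Ei ler_nat.
have HA : A != 0.
  rewrite /A /Ap Em EN /a /b !natrM.
  rewrite !mulf_neq0 //; apply/lt0r_neq0; lra.
have EP : A * Pc n k l al be h (k + l + M).+2 = A + C - x * D.
  rewrite /A /C /D /Ap /Cp /Dp /Pc /Sc /a /b /x Ei Em EN !natrM !pochS !poch0.
  field.
  by apply/and4P; split; apply/eqP => H; lra.
have ES : A * Sc n k l al be (k + l + M).+2 = - C.
  rewrite /A /C /Ap /Cp /Sc /a /b Ei Em EN !natrM.
  field.
  by apply/and4P; split; apply/eqP => H; lra.
apply: (mulfI HA); rewrite mulrDr (mulrA A) EP (mulrA A) ES.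
apply/eqP; rewrite -subr_eq0; apply/eqP; rewrite -Hcore; ring.
Qed.

Theorem theorem3 (R : realFieldType) (n k l : nat) (al be : R) :
  (k + l <= n)%N -> -1 < al -> -1 < be ->
  (2 * (k + l))%:R + sigma al be != 0 ->
  forall h : nat, (k <= h <= n - l)%N ->
  [/\ zc n k l al be h (k + l) =
        'C(n, h)%:R * (poch (al + (2 * l)%:R + 1) (n - l - h)
                       * poch (be + (2 * k)%:R + 1) (h - k))
        / poch ((2 * k)%:R + (2 * l)%:R + sigma al be + 1) (n - k - l),
      (forall i : nat, (k + l + 1 <= i <= n)%N ->
        zc n k l al be h i =
          ((2 * i%:R + sigma al be) * (i%:R + k%:R + l%:R + al + be) * (i%:R - n%:R - 1))
          / ((al + l%:R + i%:R - k%:R) * (i%:R + n%:R + sigma al be)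
             * (2 * i%:R + al + be - 1))
          * zc n k l al be h i.-1),
      wc n k l al be h (k + l) = 1,
      ((k + l + 1 <= n)%N ->
        wc n k l al be h (k + l).+1 =
          1 + ((h%:R - k%:R) * ((2 * k)%:R + (2 * l)%:R + sigma al be + 1))
              / (((k + l)%:R - n%:R) * (be + (2 * k)%:R + 1)))
    & (forall i : nat, (k + l + 2 <= i <= n)%N ->
        wc n k l al be h i =
          Pc n k l al be h i * wc n k l al be h i.-1
          + Sc n k l al be i * wc n k l al be h (i - 2))].
Proof.
move=> Hkl Hal Hbe Hs h Hh; split.
- exact: part1.
- exact: part2.
- exact: part3.
- exact: part4.
- exact: part5.
Qed.
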